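(* Let $k$ be a positive integer and $f\in\mathcal R^0_{[1]}(\mathbb R^2)$. Then for every integer $m\ge 2k$, the function $f^m$ is $k$-flat.
   Context: For $k\in\mathbb N\cup\{\infty\}$, $\mathcal R^k(\mathbb R^2)$ denotes the ring of functions $f:\mathbb R^2\to\mathbb R$ of class $C^k$ that coincide with $p/q$ ($p,q$ polynomials, $q$ nonvanishing there) on some nonempty Zariski open set. For $l\in\mathbb N$: consider compositions $\pi:M\to\mathbb R^2$ of successive blowings-up $M_i\to M_{i-1}$ ($M_0=\mathbb R^2$), each centred at points. An infinitely near point of order $j$ is a sequence $a_0\in M_0,\dots,a_j\in M_j$ where $M_i$ is the blowing-up of $M_{i-1}$ at $a_{i-1}$ and $a_i$ maps to $a_{i-1}$; the number of stages of $\pi$ is the maximal order of infinitely near points in $M$. $\mathcal R^k_{[l]}(\mathbb R^2)$ is the set of $f\in\mathcal R^k(\mathbb R^2)$ for which there is such a $\pi$ with at most $l$ stages such that $f\circ\pi$ is regular on $M$. A function $g:\mathbb R^2\to\mathbb R$ is $k$-flat at a point $a$ if $g$ is of class $C^k$ at $a$ and all partial derivatives of $g$ of order $\le k$ vanish at $a$; $g$ is $k$-flat if it is $k$-flat at every point of its zero set. *)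

(* Defs.v *)
From Stdlib Require Export Reals List.
Open Scope R_scope.

Inductive pexpr : Type :=
| PC : R -> pexpr
| PX : pexpr
| PY : pexpr
| PAdd : pexpr -> pexpr -> pexpr
| PMul : pexpr -> pexpr -> pexpr.

Fixpoint peval (e : pexpr) (x y : R) : R :=
  match e with
  | PC c => c
  | PX => x
  | PY => y
  | PAdd a b => peval a x y + peval b x y
  | PMul a b => peval a x y * peval b x y
  end.

(** Every Zariski open subset of R^2 is of the form {h <> 0}. *)

Definition regular_at (g : R -> R -> R) (x0 y0 : R) : Prop :=
  exists p q h : pexpr,
    peval h x0 y0 <> 0 /\
    forall x y, peval h x y <> 0 ->
      peval q x y <> 0 /\ g x y = peval p x y / peval q x y.

Definition cont_at (g : R -> R -> R) (x0 y0 : R) : Prop :=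
  forall eps, 0 < eps -> exists delta, 0 < delta /\
    forall x y, Rabs (x - x0) < delta -> Rabs (y - y0) < delta ->
      Rabs (g x y - g x0 y0) < eps.

Definition cont_on (U : R -> R -> Prop) (g : R -> R -> R) : Prop :=
  forall x y, U x y -> cont_at g x y.

Definition open2 (U : R -> R -> Prop) : Prop :=
  forall x y, U x y -> exists r, 0 < r /\
    forall x' y', Rabs (x' - x) < r -> Rabs (y' - y) < r -> U x' y'.

Definition R0 (f : R -> R -> R) : Prop :=
  (forall x y, cont_at f x y) /\
  exists p q h : pexpr,
    (exists x y, peval h x y <> 0) /\
    forall x y, peval h x y <> 0 ->
      peval q x y <> 0 /\ f x y = peval p x y / peval q x y.

(** f ∘ π is regular on M, where π : M -> R^2 is the blowing-up of R^2 at
    the finitely many (distinct) points of S (a one-stage composition of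
    point blowings-up).  Regularity is checked on the standard affine charts:
    away from S, M = R^2; over a center a = (a1,a2) the two charts are
    (s,t) |-> (a1 + s, a2 + s t) and (u,v) |-> (a1 + u v, a2 + v), whose
    exceptional divisor is {s = 0}, resp. {v = 0}. *)
Definition regular_after_blowup (f : R -> R -> R) (S : list (R * R)) : Prop :=
  (forall x y, ~ In (x, y) S -> regular_at f x y) /\
  (forall a1 a2, In (a1, a2) S ->
     (forall t, regular_at (fun s t => f (a1 + s) (a2 + s * t)) 0 t) /\
     (forall u, regular_at (fun u v => f (a1 + u * v) (a2 + v)) u 0)).

(** R^0_[1](R^2). The empty list gives π = id (0 stages). *)
Definition R0_1 (f : R -> R -> R) : Prop :=
  R0 f /\ exists S : list (R * R), regular_after_blowup f S.

Fixpoint Ck_on (k : nat) (U : R -> R -> Prop) (g : R -> R -> R) : Prop :=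
  cont_on U g /\
  match k with
  | O => True
  | S k' => exists gx gy : R -> R -> R,
      (forall x y, U x y ->
         derivable_pt_lim (fun t => g t y) x (gx x y) /\
         derivable_pt_lim (fun t => g x t) y (gy x y)) /\
      Ck_on k' U gx /\ Ck_on k' U gy
  end.

Inductive dir : Type := Dx | Dy.

(** is_pderiv U w g h : h is the iterated partial derivative of g on U
    along the word of directions w (applied left to right). *)
Inductive is_pderiv (U : R -> R -> Prop) :
  list dir -> (R -> R -> R) -> (R -> R -> R) -> Prop :=
| pd_nil : forall g, is_pderiv U nil g g
| pd_x : forall w g g' h,
    (forall x y, U x y -> derivable_pt_lim (fun t => g t y) x (g' x y)) ->
    is_pderiv U w g' h -> is_pderiv U (Dx :: w) g h
| pd_y : forall w g g' h,
    (forall x y, U x y -> derivable_pt_lim (fun t => g x t) y (g' x y)) ->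
    is_pderiv U w g' h -> is_pderiv U (Dy :: w) g h.

Definition kflat_at (k : nat) (g : R -> R -> R) (x0 y0 : R) : Prop :=
  exists U : R -> R -> Prop,
    open2 U /\ U x0 y0 /\ Ck_on k U g /\
    forall (w : list dir) (h : R -> R -> R),
      (length w <= k)%nat -> is_pderiv U w g h -> h x0 y0 = 0.

Definition kflat (k : nat) (g : R -> R -> R) : Prop :=
  forall x y, g x y = 0 -> kflat_at k g x y.

(* Main.v *)
Require Import Defs.
From Stdlib Require Import Reals List Lra Lia Classical ClassicalEpsilon.
From Coquelicot Require Import Coquelicot.
Open Scope R_scope.

Fixpoint dX (e:pexpr) : pexpr := match e with
 | PC _ => PC 0 | PX => PC 1 | PY => PC 0
 | PAdd a b => PAdd (dX a) (dX b)
 | PMul a b => PAdd (PMul (dX a) b) (PMul a (dX b)) end.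
Fixpoint dY (e:pexpr) : pexpr := match e with
 | PC _ => PC 0 | PX => PC 0 | PY => PC 1
 | PAdd a b => PAdd (dY a) (dY b)
 | PMul a b => PAdd (PMul (dY a) b) (PMul a (dY b)) end.
Fixpoint psubst (e u v : pexpr) : pexpr := match e with
 | PC c => PC c | PX => u | PY => v
 | PAdd a b => PAdd (psubst a u v) (psubst b u v)
 | PMul a b => PMul (psubst a u v) (psubst b u v) end.

Lemma peval_subst e u v x y : peval (psubst e u v) x y = peval e (peval u x y) (peval v x y).
Proof. induction e; simpl; try rewrite IHe1, IHe2; reflexivity. Qed.

Lemma isd_eq (f : R -> R) (x l l' : R) : is_derive f x l -> l = l' -> is_derive f x l'.
Proof. intros H ->; exact H. Qed.

Lemma peval_chain e (u v : R -> R) (t u' v' : R) :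
  is_derive u t u' -> is_derive v t v' ->
  is_derive (fun r => peval e (u r) (v r)) t
    (peval (dX e) (u t) (v t) * u' + peval (dY e) (u t) (v t) * v').
Proof.
  intros Hu Hv. induction e; simpl.
  - eapply isd_eq. apply (is_derive_const (K:=R_AbsRing) r). unfold zero; simpl; ring.
  - eapply isd_eq. exact Hu. ring.
  - eapply isd_eq. exact Hv. ring.
  - eapply isd_eq. apply (is_derive_plus _ _ _ _ _ IHe1 IHe2). simpl. unfold plus; simpl. ring.
  - eapply isd_eq. apply (is_derive_mult _ _ _ _ _ IHe1 IHe2). intros; apply Rmult_comm.
    unfold plus, mult; simpl. ring.
Qed.

Lemma isd_const (c x : R) : is_derive (fun _ : R => c) x 0.
Proof. apply (is_derive_const (K:=R_AbsRing) c). Qed.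
Lemma isd_id (x : R) : is_derive (fun t : R => t) x 1.
Proof. apply (is_derive_id (K:=R_AbsRing)). Qed.

Lemma cont_of_continuous (g : R->R->R) x0 y0 :
  continuous (fun z : R*R => g (fst z) (snd z)) (x0,y0) -> cont_at g x0 y0.
Proof.
  intros H eps Heps.
  assert (L : locally (g x0 y0) (fun r => Rabs (r - g x0 y0) < eps)).
  { exists (mkposreal eps Heps). intros r Hr. exact Hr. }
  destruct (H _ L) as [d Hd]. exists d. split. apply cond_pos.
  intros x y Hx Hy. apply (Hd (x,y)). split; assumption.
Qed.

Lemma peval_continuous e x y : continuous (fun z : R*R => peval e (fst z) (snd z)) (x,y).
Proof.
  induction e; simpl.
  - apply continuous_const.
  - apply continuous_fst.
  - apply continuous_snd.
  - apply (continuous_plus (fun z : R*R => peval e1 (fst z) (snd z)) (fun z : R*R => peval e2 (fst z) (snd z))); assumption.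
  - apply (continuous_mult (fun z : R*R => peval e1 (fst z) (snd z)) (fun z : R*R => peval e2 (fst z) (snd z))); assumption.
Qed.

Lemma rat_continuous p q x y : peval q x y <> 0 ->
  continuous (fun z : R*R => peval p (fst z) (snd z) / peval q (fst z) (snd z)) (x,y).
Proof.
  intros Hq. unfold Rdiv.
  apply (continuous_mult (fun z : R*R => peval p (fst z) (snd z)) (fun z : R*R => / peval q (fst z) (snd z))).
  apply peval_continuous.
  apply (continuous_comp (fun z : R*R => peval q (fst z) (snd z)) (fun r => / r)).
  apply peval_continuous. apply continuous_Rinv. exact Hq.
Qed.

Lemma poly_cont e x y : cont_at (peval e) x y.
Proof. apply cont_of_continuous, peval_continuous. Qed.

Lemma poly_nz_box h x y : peval h x y <> 0 -> exists r, 0<r /\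
  forall x' y', Rabs (x'-x) < r -> Rabs (y'-y) < r -> peval h x' y' <> 0.
Proof.
  intros Hh. destruct (poly_cont h x y (Rabs (peval h x y))) as [d [Hd H]].
  apply Rabs_pos_lt; exact Hh.
  exists d; split; auto. intros x' y' H1 H2 E. specialize (H x' y' H1 H2).
  rewrite E in H. rewrite Rminus_0_l, Rabs_Ropp in H. lra.
Qed.

Definition wit (g : R -> R -> R) p q h := forall x y, peval h x y <> 0 ->
  peval q x y <> 0 /\ g x y = peval p x y / peval q x y.

Lemma cont_at_loc (g g' : R -> R -> R) x0 y0 r : 0 < r ->
  (forall x y, Rabs (x-x0) < r -> Rabs (y-y0) < r -> g x y = g' x y) ->
  cont_at g' x0 y0 -> cont_at g x0 y0.
Proof.
  intros Hr E H eps He. destruct (H eps He) as [d [Hd Hd']].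
  exists (Rmin d r). split. apply Rmin_pos; auto.
  intros x y Hx Hy. rewrite !E; try (apply Hd'); try apply (Rlt_le_trans _ _ _ Hx); try apply (Rlt_le_trans _ _ _ Hy);
   try apply Rmin_l; try apply Rmin_r; rewrite ?Rminus_diag, ?Rabs_R0; auto.
Qed.

Lemma reg_cont g x y : regular_at g x y -> cont_at g x y.
Proof.
  intros [p [q [h [Hh W]]]]. destruct (poly_nz_box h x y Hh) as [r [Hr Hb]].
  apply (cont_at_loc g (fun x y => peval p x y / peval q x y) x y r Hr).
  intros; apply W; auto.
  apply cont_of_continuous. apply rat_continuous. apply W; auto.
Qed.

Definition Dx (g : R -> R -> R) : R -> R -> R := fun x y => Derive (fun t => g t y) x.
Definition Dy (g : R -> R -> R) : R -> R -> R := fun x y => Derive (fun t => g x t) y.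

Lemma loc_near (c : R -> R) x0 e : continuous c x0 -> 0 < e ->
  locally x0 (fun x => Rabs (c x - c x0) < e).
Proof.
  intros H He. apply (H (fun r => Rabs (r - c x0) < e)). exists (mkposreal e He). intros r Hr. exact Hr.
Qed.

Lemma wit_chain0 g p q h (W : wit g p q h) (u v : R -> R) (t u' v' : R) :
  is_derive u t u' -> is_derive v t v' -> peval h (u t) (v t) <> 0 ->
  is_derive (fun r => g (u r) (v r)) t
   (((peval (dX p) (u t) (v t) * u' + peval (dY p) (u t) (v t) * v') * peval q (u t) (v t)
     - peval p (u t) (v t) * (peval (dX q) (u t) (v t) * u' + peval (dY q) (u t) (v t) * v'))
     / (peval q (u t) (v t) ^ 2)).
Proof.
  intros Hu Hv Hh. destruct (W _ _ Hh) as [Hq _].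
  destruct (poly_nz_box h _ _ Hh) as [r [Hr Hb]].
  apply (is_derive_ext_loc (fun r => peval p (u r) (v r) / peval q (u r) (v r))).
  - assert (Cu := loc_near u t r (ex_derive_continuous u t (ex_intro _ u' Hu)) Hr).
    assert (Cv := loc_near v t r (ex_derive_continuous v t (ex_intro _ v' Hv)) Hr).
    generalize (filter_and _ _ Cu Cv). apply filter_imp. intros x [H1 H2].
    symmetry. apply W. apply Hb; auto.
  - apply (is_derive_div (fun r => peval p (u r) (v r)) (fun r => peval q (u r) (v r))).
    apply peval_chain; auto. apply peval_chain; auto. exact Hq.
Qed.

Definition dqX p q := PAdd (PMul (dX p) q) (PMul (PC (-1)) (PMul p (dX q))).
Definition dqY p q := PAdd (PMul (dY p) q) (PMul (PC (-1)) (PMul p (dY q))).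

Lemma wit_Dx g p q h : wit g p q h -> wit (Dx g) (dqX p q) (PMul q q) h.
Proof.
  intros W x y Hh. destruct (W _ _ Hh) as [Hq _]. simpl. split.
  apply Rmult_integral_contrapositive; auto.
  unfold Dx. apply is_derive_unique.
  eapply isd_eq. apply (wit_chain0 g p q h W (fun t => t) (fun _ => y) x 1 0).
  apply isd_id. apply isd_const. exact Hh.
  unfold dqX; simpl. field. exact Hq.
Qed.

Lemma wit_Dy g p q h : wit g p q h -> wit (Dy g) (dqY p q) (PMul q q) h.
Proof.
  intros W x y Hh. destruct (W _ _ Hh) as [Hq _]. simpl. split.
  apply Rmult_integral_contrapositive; auto.
  unfold Dy. apply is_derive_unique.
  eapply isd_eq. apply (wit_chain0 g p q h W (fun _ => x) (fun t => t) y 0 1).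
  apply isd_const. apply isd_id. exact Hh.
  unfold dqY; simpl. field. exact Hq.
Qed.

Lemma wit_chain g p q h (W : wit g p q h) (u v : R -> R) (t u' v' : R) :
  is_derive u t u' -> is_derive v t v' -> peval h (u t) (v t) <> 0 ->
  is_derive (fun r => g (u r) (v r)) t (Dx g (u t) (v t) * u' + Dy g (u t) (v t) * v').
Proof.
  intros Hu Hv Hh. eapply isd_eq. apply (wit_chain0 g p q h W u v t u' v' Hu Hv Hh).
  destruct (wit_Dx g p q h W _ _ Hh) as [_ E1]. destruct (wit_Dy g p q h W _ _ Hh) as [_ E2].
  destruct (W _ _ Hh) as [Hq _].
  rewrite E1, E2. unfold dqX, dqY; simpl. field. exact Hq.
Qed.

Lemma reg_Dx g x y : regular_at g x y -> regular_at (Dx g) x y.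
Proof. intros [p [q [h [Hh W]]]]. exists (dqX p q), (PMul q q), h. split; auto. apply wit_Dx; auto. Qed.
Lemma reg_Dy g x y : regular_at g x y -> regular_at (Dy g) x y.
Proof. intros [p [q [h [Hh W]]]]. exists (dqY p q), (PMul q q), h. split; auto. apply wit_Dy; auto. Qed.

Lemma reg_derx g x y : regular_at g x y -> is_derive (fun t => g t y) x (Dx g x y).
Proof.
  intros [p [q [h [Hh W]]]]. eapply isd_eq.
  apply (wit_chain g p q h W (fun t => t) (fun _ => y) x 1 0).
  apply isd_id. apply isd_const. exact Hh. ring.
Qed.
Lemma reg_dery g x y : regular_at g x y -> is_derive (fun t => g x t) y (Dy g x y).
Proof.
  intros [p [q [h [Hh W]]]]. eapply isd_eq.
  apply (wit_chain g p q h W (fun _ => x) (fun t => t) y 0 1).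
  apply isd_const. apply isd_id. exact Hh. ring.
Qed.

Lemma reg_mult g1 g2 x y : regular_at g1 x y -> regular_at g2 x y ->
  regular_at (fun x y => g1 x y * g2 x y) x y.
Proof.
  intros [p1 [q1 [h1 [H1 W1]]]] [p2 [q2 [h2 [H2 W2]]]].
  exists (PMul p1 p2), (PMul q1 q2), (PMul h1 h2). simpl. split.
  apply Rmult_integral_contrapositive; auto.
  intros x' y' Hh. simpl in Hh.
  assert (A1 : peval h1 x' y' <> 0) by (intro E; apply Hh; rewrite E; ring).
  assert (A2 : peval h2 x' y' <> 0) by (intro E; apply Hh; rewrite E; ring).
  destruct (W1 _ _ A1) as [Q1 E1]. destruct (W2 _ _ A2) as [Q2 E2].
  split. apply Rmult_integral_contrapositive; auto.
  rewrite E1, E2. field. auto.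
Qed.

Lemma reg_plus g1 g2 x y : regular_at g1 x y -> regular_at g2 x y ->
  regular_at (fun x y => g1 x y + g2 x y) x y.
Proof.
  intros [p1 [q1 [h1 [H1 W1]]]] [p2 [q2 [h2 [H2 W2]]]].
  exists (PAdd (PMul p1 q2) (PMul p2 q1)), (PMul q1 q2), (PMul h1 h2). simpl. split.
  apply Rmult_integral_contrapositive; auto.
  intros x' y' Hh. simpl in Hh.
  assert (A1 : peval h1 x' y' <> 0) by (intro E; apply Hh; rewrite E; ring).
  assert (A2 : peval h2 x' y' <> 0) by (intro E; apply Hh; rewrite E; ring).
  destruct (W1 _ _ A1) as [Q1 E1]. destruct (W2 _ _ A2) as [Q2 E2].
  split. apply Rmult_integral_contrapositive; auto.
  rewrite E1, E2. field. auto.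
Qed.

Lemma reg_poly e x y : regular_at (peval e) x y.
Proof.
  exists e, (PC 1), (PC 1). simpl. split. lra. intros. split. lra. field.
Qed.

Lemma reg_ext g1 g2 x y : (forall a b, g1 a b = g2 a b) -> regular_at g1 x y -> regular_at g2 x y.
Proof.
  intros E [p [q [h [H W]]]]. exists p, q, h. split; auto. intros a b Hh.
  rewrite <- E. apply W; auto.
Qed.

Lemma reg_swap g x y : regular_at g x y -> regular_at (fun a b => g b a) y x.
Proof.
  intros [p [q [h [H W]]]]. exists (psubst p PY PX), (psubst q PY PX), (psubst h PY PX).
  rewrite !peval_subst. simpl. split; auto. intros a b Hh. rewrite !peval_subst in *. simpl in *.
  apply W; auto.
Qed.

Definition C1 (n:nat) (a1 a2 : R) (g : R->R->R) : Prop :=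
  forall t, exists G, regular_at G 0 t /\ exists d, 0 < d /\
    forall s t', s <> 0 -> Rabs s < d -> Rabs (t' - t) < d ->
      g (a1+s) (a2+s*t') = s^n * G s t'.

Lemma cont_of_isd (f : R -> R) (x l : R) : is_derive f x l -> continuous f x.
Proof.
  intros H. apply is_derive_Reals in H. apply continuity_pt_filterlim.
  apply derivable_continuous_pt. exists l. exact H.
Qed.

Lemma cont_lin (a b : R) x : continuous (fun y : R => a * y + b) x.
Proof. apply (cont_of_isd _ _ a). auto_derive. auto. ring. Qed.

Lemma loc_ne (a1 s x0 : R) : s <> 0 -> x0 - a1 = s -> locally x0 (fun x => x - a1 <> 0).
Proof.
  intros Hs E. generalize (loc_near (fun y => 1 * y + - a1) x0 (Rabs s) (cont_lin _ _ _) (Rabs_pos_lt _ Hs)).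
  apply filter_imp. intros x H Z. replace (1 * x + - a1) with (x - a1) in H by ring.
  replace (1 * x0 + - a1) with (x0 - a1) in H by ring. rewrite Z, E in H.
  rewrite Rminus_0_l, Rabs_Ropp in H. lra.
Qed.

Lemma loc_abs (a1 s x0 d : R) : Rabs s < d -> x0 - a1 = s -> locally x0 (fun x => Rabs (x - a1) < d).
Proof.
  intros Hs E. generalize (loc_near (fun y => 1 * y + - a1) x0 (d - Rabs s) (cont_lin _ _ _) ltac:(lra)).
  apply filter_imp. intros x H. replace (1 * x + - a1) with (x - a1) in H by ring.
  replace (1 * x0 + - a1) with (x0 - a1) in H by ring. rewrite E in H.
  replace (x - a1) with ((x - a1 - s) + s) by ring.
  generalize (Rabs_triang (x - a1 - s) s). lra.
Qed.

Lemma loc_cont_lt (c : R -> R) x0 t d : continuous c x0 -> Rabs (c x0 - t) < d ->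
  locally x0 (fun x => Rabs (c x - t) < d).
Proof.
  intros Hc Hd. generalize (loc_near c x0 (d - Rabs (c x0 - t)) Hc ltac:(lra)).
  apply filter_imp. intros x H.
  replace (c x - t) with ((c x - c x0) + (c x0 - t)) by ring.
  generalize (Rabs_triang (c x - c x0) (c x0 - t)). lra.
Qed.

Lemma C1_Dx n a1 a2 g : C1 (S n) a1 a2 g -> C1 n a1 a2 (Dx g).
Proof.
  intros H t. destruct (H t) as [G [HG [d [Hd E]]]].
  assert (HG' := HG). destruct HG' as [p [q [h [Hh W]]]].
  destruct (poly_nz_box h 0 t Hh) as [r [Hr Hb]].
  exists (fun s t => (INR (S n) * G s t + s * Dx G s t) + (-1 * t) * Dy G s t).
  split.
  { apply reg_plus. apply reg_plus.
    apply (reg_mult (peval (PC (INR (S n)))) G). apply reg_poly. exact HG.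
    apply (reg_mult (peval PX) (Dx G)). apply reg_poly. apply reg_Dx; exact HG.
    apply (reg_mult (peval (PMul (PC (-1)) PY)) (Dy G)). apply reg_poly. apply reg_Dy; exact HG. }
  exists (Rmin d r). split. apply Rmin_pos; auto.
  intros s t' Hs Hsd Ht.
  assert (Hsd1 : Rabs s < d) by (eapply Rlt_le_trans; [exact Hsd| apply Rmin_l]).
  assert (Hsd2 : Rabs s < r) by (eapply Rlt_le_trans; [exact Hsd| apply Rmin_r]).
  assert (Ht1 : Rabs (t' - t) < d) by (eapply Rlt_le_trans; [exact Ht| apply Rmin_l]).
  assert (Ht2 : Rabs (t' - t) < r) by (eapply Rlt_le_trans; [exact Ht| apply Rmin_r]).
  set (c := fun x => (a2 + s * t' - a2) / (x - a1)).
  assert (Cc : continuous c (a1 + s)).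
  { apply (cont_of_isd _ _ (- (s * t') / s ^ 2)). unfold c. auto_derive. intro; apply Hs; lra.
    replace (a1 + s + - a1) with s by ring. field. exact Hs. }
  assert (c0 : c (a1 + s) = t') by (unfold c; field; replace (a1 + s - a1) with s by ring; exact Hs).
  assert (HD : is_derive (fun x => (x - a1) ^ (S n) * G (x - a1) (c x)) (a1 + s)
     (INR (S n) * s ^ n * G s t' + s ^ (S n) * (Dx G s t' * 1 + Dy G s t' * (- (s * t') / s ^ 2)))).
  { eapply isd_eq. apply (is_derive_mult (fun x => (x - a1) ^ (S n)) (fun x => G (x - a1) (c x))).
    - assert (D1 : is_derive (fun x => (x - a1) ^ (S n)) (a1 + s) (INR (S n) * s ^ n)).
      { auto_derive. auto. rewrite S_INR. replace (a1 + s + - a1) with s by ring. destruct n; simpl; ring. }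
      exact D1.
    - apply (wit_chain G p q h W (fun x => x - a1) c (a1 + s) 1 (- (s * t') / s ^ 2)).
      + auto_derive. auto. ring.
      + unfold c. auto_derive. intro; apply Hs; lra.
        replace (a1 + s + - a1) with s by ring. field. exact Hs.
      + rewrite c0. replace (a1 + s - a1) with s by ring. apply Hb. rewrite Rminus_0_r; auto. auto.
    - intros; apply Rmult_comm.
    - rewrite c0. replace (a1 + s - a1) with s by ring. unfold plus, mult; simpl. ring. }
  change (Dx g (a1+s) (a2+s*t')) with (Derive (fun x => g x (a2 + s*t')) (a1+s)). erewrite is_derive_unique.
  2: { apply (is_derive_ext_loc (fun x => (x - a1) ^ (S n) * G (x - a1) (c x))). 2: exact HD.
       assert (L1 := loc_ne a1 s (a1 + s) Hs ltac:(ring)).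
       assert (L2 := loc_abs a1 s (a1 + s) d Hsd1 ltac:(ring)).
       assert (L3 := loc_cont_lt c (a1 + s) t d Cc ltac:(rewrite c0; exact Ht1)).
       generalize (filter_and _ _ L1 (filter_and _ _ L2 L3)). apply filter_imp.
       intros x [N1 [N2 N3]]. change R in x.
       generalize (E (x - a1) (c x) N1 N2 N3).
       replace (a1 + (x - a1)) with x by ring.
       replace (a2 + (x - a1) * c x) with (a2 + s * t'). intros ->. reflexivity.
       unfold c. field. exact N1. }
  simpl. field. exact Hs.
Qed.

Lemma C1_Dy n a1 a2 g : C1 (S n) a1 a2 g -> C1 n a1 a2 (Dy g).
Proof.
  intros H t. destruct (H t) as [G [HG [d [Hd E]]]].
  assert (HG' := HG). destruct HG' as [p [q [h [Hh W]]]].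
  destruct (poly_nz_box h 0 t Hh) as [r [Hr Hb]].
  exists (Dy G). split. apply reg_Dy; exact HG.
  exists (Rmin d r). split. apply Rmin_pos; auto.
  intros s t' Hs Hsd Ht.
  assert (Hsd1 : Rabs s < d) by (eapply Rlt_le_trans; [exact Hsd| apply Rmin_l]).
  assert (Hsd2 : Rabs s < r) by (eapply Rlt_le_trans; [exact Hsd| apply Rmin_r]).
  assert (Ht1 : Rabs (t' - t) < d) by (eapply Rlt_le_trans; [exact Ht| apply Rmin_l]).
  assert (Ht2 : Rabs (t' - t) < r) by (eapply Rlt_le_trans; [exact Ht| apply Rmin_r]).
  set (c := fun y => (y - a2) / s).
  assert (Cc : continuous c (a2 + s * t')).
  { apply (cont_of_isd _ _ (/ s)). unfold c. auto_derive; [easy|]. field. exact Hs. }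
  assert (c0 : c (a2 + s * t') = t') by (unfold c; field; exact Hs).
  assert (HD : is_derive (fun y => s ^ (S n) * G s (c y)) (a2 + s * t')
     (s ^ (S n) * (Dx G s t' * 0 + Dy G s t' * / s))).
  { eapply isd_eq. apply (is_derive_mult (fun _ => s ^ (S n)) (fun y => G s (c y))).
    - apply isd_const.
    - apply (wit_chain G p q h W (fun _ => s) c (a2 + s * t') 0 (/ s)).
      + apply isd_const.
      + unfold c. auto_derive; [easy|]. field. exact Hs.
      + rewrite c0. apply Hb. rewrite Rminus_0_r; auto. auto.
    - intros; apply Rmult_comm.
    - rewrite c0. unfold plus, mult; simpl. ring. }
  change (Dy g (a1+s) (a2+s*t')) with (Derive (fun y => g (a1 + s) y) (a2+s*t')). erewrite is_derive_unique.
  2: { apply (is_derive_ext_loc (fun y => s ^ (S n) * G s (c y))). 2: exact HD.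
       assert (L3 := loc_cont_lt c (a2 + s * t') t d Cc ltac:(rewrite c0; exact Ht1)).
       generalize L3. apply filter_imp.
       intros y N3. change R in y.
       generalize (E s (c y) Hs Hsd1 N3).
       replace (a2 + s * c y) with y. intros ->. reflexivity.
       unfold c. field. exact Hs. }
  simpl. field. exact Hs.
Qed.

Lemma C1_mult i j a1 a2 g1 g2 : C1 i a1 a2 g1 -> C1 j a1 a2 g2 ->
  C1 (i + j) a1 a2 (fun x y => g1 x y * g2 x y).
Proof.
  intros H1 H2 t. destruct (H1 t) as [G1 [R1 [d1 [D1 E1]]]]. destruct (H2 t) as [G2 [R2 [d2 [D2 E2]]]].
  exists (fun x y => G1 x y * G2 x y). split. apply reg_mult; auto.
  exists (Rmin d1 d2). split. apply Rmin_pos; auto.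
  intros s t' Hs Hsd Ht.
  rewrite E1, E2; auto; try (eapply Rlt_le_trans; [eassumption| first [apply Rmin_l|apply Rmin_r]]).
  rewrite pow_add. ring.
Qed.

Lemma C1_ext n a1 a2 g g' : (forall x y, g x y = g' x y) -> C1 n a1 a2 g -> C1 n a1 a2 g'.
Proof.
  intros E H t. destruct (H t) as [G [RG [d [D E1]]]]. exists G. split; auto. exists d. split; auto.
  intros. rewrite <- E. auto.
Qed.

Lemma reg_bounded G x0 y0 : regular_at G x0 y0 -> exists d M, 0 < d /\
  forall x y, Rabs (x - x0) < d -> Rabs (y - y0) < d -> Rabs (G x y) <= M.
Proof.
  intros H. destruct (reg_cont G x0 y0 H 1 Rlt_0_1) as [d [Hd Hc]].
  exists d, (Rabs (G x0 y0) + 1). split; auto. intros x y Hx Hy.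
  specialize (Hc x y Hx Hy).
  replace (G x y) with ((G x y - G x0 y0) + G x0 y0) by ring.
  generalize (Rabs_triang (G x y - G x0 y0) (G x0 y0)). lra.
Qed.

Lemma C1_bound n a1 a2 g : C1 n a1 a2 g -> exists d M, 0 < d /\
  forall s t', s <> 0 -> Rabs s < d -> -1 <= t' <= 1 -> Rabs (g (a1+s) (a2+s*t')) <= M * Rabs s ^ n.
Proof.
  intros H.
  assert (Hex : forall t, { e : R | 0 < e /\ forall s t', s <> 0 -> Rabs s < e -> Rabs (t' - t) < e ->
             Rabs (g (a1+s) (a2+s*t')) <= / e * Rabs s ^ n }).
  { intros t. apply constructive_indefinite_description.
    destruct (H t) as [G [RG [d [D E]]]].
    destruct (reg_bounded G 0 t RG) as [d' [M [D' B]]].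
    exists (Rmin (Rmin d d') (/ (Rabs M + 1))).
    assert (P1 : 0 < / (Rabs M + 1)) by (apply Rinv_0_lt_compat; generalize (Rabs_pos M); lra).
    assert (P0 : 0 < Rmin (Rmin d d') (/ (Rabs M + 1))) by (repeat apply Rmin_pos; auto).
    split; auto.
    intros s t' Hs Hsd Ht.
    assert (L1 : Rmin (Rmin d d') (/ (Rabs M + 1)) <= d) by (eapply Rle_trans; apply Rmin_l).
    assert (L2 : Rmin (Rmin d d') (/ (Rabs M + 1)) <= d') by (eapply Rle_trans; [apply Rmin_l| apply Rmin_r]).
    assert (L3 : Rmin (Rmin d d') (/ (Rabs M + 1)) <= / (Rabs M + 1)) by apply Rmin_r.
    rewrite E; try lra.
    rewrite Rabs_mult, <- RPow_abs, Rmult_comm.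
    apply Rmult_le_compat_r. apply pow_le, Rabs_pos.
    apply Rle_trans with M. apply B; rewrite ?Rminus_0_r; lra.
    apply Rle_trans with (Rabs M + 1). generalize (Rle_abs M); lra.
    assert (A : Rabs M + 1 = / / (Rabs M + 1)) by (rewrite Rinv_inv; auto). rewrite A at 1. apply Rinv_le_contravar; auto. }
  set (delta := fun t => mkposreal (proj1_sig (Hex t)) (proj1 (proj2_sig (Hex t)))).
  destruct (compactness_value_1d (-1) 1 delta) as [d Hd].
  exists d, (/ d). split. apply cond_pos.
  intros s t' Hs Hsd Ht. specialize (Hd t' Ht).
  apply Classical_Prop.NNPP in Hd. destruct Hd as [t [_ [Htt Hdt]]].
  unfold delta in Htt, Hdt; simpl in Htt, Hdt.
  destruct (Hex t) as [e [He Be]]; simpl in Htt, Hdt.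
  apply Rle_trans with (/ e * Rabs s ^ n). apply Be; auto. lra.
  apply Rmult_le_compat_r. apply pow_le, Rabs_pos.
  apply Rinv_le_contravar; auto. apply cond_pos.
Qed.

Definition swap (g : R->R->R) : R -> R -> R := fun x y => g y x.

Definition Bc n a1 a2 g := g a1 a2 = 0 /\
  (exists rho, 0 < rho /\ forall x y, Rabs (x-a1) < rho -> Rabs (y-a2) < rho ->
      (x <> a1 \/ y <> a2) -> regular_at g x y) /\
  C1 n a1 a2 g /\ C1 n a2 a1 (swap g).

Lemma abs_le_inv a b : Rabs a <= b -> -b <= a <= b.
Proof. unfold Rabs; destruct (Rcase_abs a); lra. Qed.

Lemma Bc_est n a1 a2 g : Bc n a1 a2 g -> exists d M, 0 < d /\ 0 <= M /\
  forall x y, Rabs (x-a1) < d -> Rabs (y-a2) < d ->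
    Rabs (g x y) <= M * (Rmax (Rabs (x-a1)) (Rabs (y-a2))) ^ n.
Proof.
  intros [H0 [_ [C C']]].
  destruct (C1_bound _ _ _ _ C) as [d1 [M1 [D1 B1]]].
  destruct (C1_bound _ _ _ _ C') as [d2 [M2 [D2 B2]]].
  exists (Rmin d1 d2), (Rmax (Rabs M1) (Rabs M2)). split. apply Rmin_pos; auto.
  assert (Mp : 0 <= Rmax (Rabs M1) (Rabs M2)) by (eapply Rle_trans; [apply Rabs_pos| apply Rmax_l]).
  split; auto.
  intros x y Hx Hy.
  assert (Hx1 : Rabs (x - a1) < d1) by (eapply Rlt_le_trans; [exact Hx| apply Rmin_l]).
  assert (Hy2 : Rabs (y - a2) < d2) by (eapply Rlt_le_trans; [exact Hy| apply Rmin_r]).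
  assert (Hx2 : Rabs (x - a1) < d2) by (eapply Rlt_le_trans; [exact Hx| apply Rmin_r]).
  assert (Hy1 : Rabs (y - a2) < d1) by (eapply Rlt_le_trans; [exact Hy| apply Rmin_l]).
  destruct (Rle_lt_dec (Rabs (y - a2)) (Rabs (x - a1))) as [L|L].
  - destruct (Req_dec (x - a1) 0) as [Z|Z].
    + rewrite Z, Rabs_R0 in L.
      assert (Ey : y = a2).
      { destruct (Req_dec (y - a2) 0). lra. apply Rabs_pos_lt in H. lra. }
      assert (Ex : x = a1) by lra. subst x y. rewrite H0, Rabs_R0.
      apply Rmult_le_pos; auto. apply pow_le. eapply Rle_trans; [apply Rabs_pos| apply Rmax_l].
    + rewrite (Rmax_left (Rabs (x-a1)) (Rabs (y-a2))) by exact L.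
      assert (T : -1 <= (y - a2) / (x - a1) <= 1).
      { apply abs_le_inv. unfold Rdiv. rewrite Rabs_mult, Rabs_inv.
        apply (Rmult_le_reg_r (Rabs (x - a1))). apply Rabs_pos_lt; auto.
        rewrite Rmult_assoc, Rinv_l, Rmult_1_r, Rmult_1_l; auto. apply Rabs_no_R0; auto. }
      generalize (B1 (x - a1) ((y - a2) / (x - a1)) Z Hx1 T).
      replace (a1 + (x - a1)) with x by ring.
      replace (a2 + (x - a1) * ((y - a2) / (x - a1))) with y by (field; auto).
      intros B. eapply Rle_trans. exact B. apply Rmult_le_compat_r. apply pow_le, Rabs_pos.
      eapply Rle_trans. apply Rle_abs. apply Rmax_l.
  - assert (Z : y - a2 <> 0) by (intro E; rewrite E, Rabs_R0 in L; generalize (Rabs_pos (x - a1)); lra).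
    rewrite (Rmax_right (Rabs (x-a1)) (Rabs (y-a2))) by lra.
    assert (T : -1 <= (x - a1) / (y - a2) <= 1).
    { apply abs_le_inv. unfold Rdiv. rewrite Rabs_mult, Rabs_inv.
      apply (Rmult_le_reg_r (Rabs (y - a2))). apply Rabs_pos_lt; auto.
      rewrite Rmult_assoc, Rinv_l, Rmult_1_r, Rmult_1_l; auto. lra. apply Rabs_no_R0; auto. }
    generalize (B2 (y - a2) ((x - a1) / (y - a2)) Z Hy2 T). unfold swap.
    replace (a2 + (y - a2)) with y by ring.
    replace (a1 + (y - a2) * ((x - a1) / (y - a2))) with x by (field; auto).
    intros B. eapply Rle_trans. exact B. apply Rmult_le_compat_r. apply pow_le, Rabs_pos.
    eapply Rle_trans. apply Rle_abs. apply Rmax_r.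
Qed.

Lemma pow_le_self m n : 0 <= m <= 1 -> (1 <= n)%nat -> m ^ n <= m.
Proof.
  intros Hm Hn. induction n. lia. destruct n. simpl; lra.
  simpl. simpl in IHn. assert (0 <= m * m ^ n) by (apply Rmult_le_pos; [lra| apply pow_le; lra]).
  apply Rle_trans with (1 * (m * m ^ n)). apply Rmult_le_compat_r; lra. rewrite Rmult_1_l. apply IHn. lia.
Qed.

Lemma Bc_cont n a1 a2 g : Bc n a1 a2 g -> (1 <= n)%nat -> cont_at g a1 a2.
Proof.
  intros HB Hn. destruct (Bc_est _ _ _ _ HB) as [d [M [Hd [HM B]]]].
  destruct HB as [H0 _]. intros eps He.
  exists (Rmin (Rmin d 1) (eps / (M + 1))). split.
  repeat apply Rmin_pos; try lra. apply Rdiv_lt_0_compat; lra.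
  intros x y Hx Hy. rewrite H0, Rminus_0_r.
  set (m := Rmax (Rabs (x - a1)) (Rabs (y - a2))).
  assert (Hm0 : 0 <= m) by (eapply Rle_trans; [apply Rabs_pos| apply Rmax_l]).
  assert (Hm : m < Rmin (Rmin d 1) (eps / (M + 1))) by (unfold m; apply Rmax_lub_lt; auto).
  assert (Hm1 : m <= 1) by (generalize (Rmin_l (Rmin d 1) (eps / (M+1))) (Rmin_r d 1); lra).
  assert (Hm2 : m < eps / (M + 1)) by (generalize (Rmin_r (Rmin d 1) (eps / (M+1))); lra).
  eapply Rle_lt_trans. apply B.
  generalize (Rmin_l (Rmin d 1) (eps / (M+1))) (Rmin_l d 1); lra.
  generalize (Rmin_l (Rmin d 1) (eps / (M+1))) (Rmin_l d 1); lra.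
  fold m. apply Rle_lt_trans with (M * m). apply Rmult_le_compat_l; auto. apply pow_le_self; auto.
  apply Rle_lt_trans with (M * (eps / (M + 1))). apply Rmult_le_compat_l; lra.
  apply (Rmult_lt_reg_r (M + 1)). lra. field_simplify; lra.
Qed.

Lemma Bc_derx n a1 a2 g : Bc n a1 a2 g -> (2 <= n)%nat -> is_derive (fun t => g t a2) a1 0.
Proof.
  intros HB Hn. destruct (Bc_est _ _ _ _ HB) as [d [M [Hd [HM B]]]].
  destruct HB as [H0 _]. apply is_derive_Reals. intros eps He.
  assert (P : 0 < Rmin (Rmin d 1) (eps / (M + 1))).
  { repeat apply Rmin_pos; try lra. apply Rdiv_lt_0_compat; lra. }
  exists (mkposreal _ P). simpl. intros h Hh Hhd.
  rewrite H0, Rminus_0_r, Rminus_0_r.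
  assert (Hh1 : Rabs h < d) by (generalize (Rmin_l (Rmin d 1) (eps / (M+1))) (Rmin_l d 1); lra).
  assert (Hh2 : Rabs h <= 1) by (generalize (Rmin_l (Rmin d 1) (eps / (M+1))) (Rmin_r d 1); lra).
  assert (Hh3 : Rabs h < eps / (M + 1)) by (generalize (Rmin_r (Rmin d 1) (eps / (M+1))); lra).
  generalize (B (a1 + h) a2). replace (a1 + h - a1) with h by ring. rewrite Rminus_diag, Rabs_R0.
  rewrite Rmax_left by apply Rabs_pos. intros Bh. specialize (Bh Hh1 Hd).
  unfold Rdiv. rewrite Rabs_mult, Rabs_inv.
  apply (Rmult_lt_reg_r (Rabs h)). apply Rabs_pos_lt; auto.
  rewrite Rmult_assoc, Rinv_l, Rmult_1_r by (apply Rabs_no_R0; auto).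
  eapply Rle_lt_trans. exact Bh.
  destruct n as [|[|n]]; try lia.
  replace (Rabs h ^ S (S n)) with (Rabs h * (Rabs h ^ S n)) by reflexivity.
  assert (Q : Rabs h ^ S n <= Rabs h) by (apply pow_le_self; [split; [apply Rabs_pos| auto] | lia]).
  assert (0 < Rabs h) by (apply Rabs_pos_lt; auto).
  apply Rle_lt_trans with (M * (Rabs h * Rabs h)).
  apply Rmult_le_compat_l; auto. apply Rmult_le_compat_l; auto. apply Rabs_pos.
  replace (M * (Rabs h * Rabs h)) with ((M * Rabs h) * Rabs h) by ring.
  apply Rmult_lt_compat_r; auto.
  apply Rle_lt_trans with (M * (eps / (M + 1))). apply Rmult_le_compat_l; lra.
  apply (Rmult_lt_reg_r (M + 1)). lra. field_simplify; lra.
Qed.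

Lemma Bc_swap n a1 a2 g : Bc n a1 a2 g -> Bc n a2 a1 (swap g).
Proof.
  intros [H0 [[rho [Hr R]] [C C']]]. split. exact H0. split.
  exists rho. split; auto. intros x y Hx Hy N. apply (reg_swap g y x). apply R; auto. tauto.
  split. exact C'. exact C.
Qed.

Lemma Bc_dery n a1 a2 g : Bc n a1 a2 g -> (2 <= n)%nat -> is_derive (fun t => g a1 t) a2 0.
Proof. intros H Hn. exact (Bc_derx n a2 a1 (swap g) (Bc_swap _ _ _ _ H) Hn). Qed.

Lemma Bc_Dx n a1 a2 g : Bc (S n) a1 a2 g -> (1 <= n)%nat -> Bc n a1 a2 (Dx g).
Proof.
  intros HB Hn. assert (D := Bc_derx _ _ _ _ HB ltac:(lia)).
  destruct HB as [H0 [[rho [Hr R]] [C C']]].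
  split. unfold Dx. apply is_derive_unique. exact D.
  split. exists rho. split; auto. intros. apply reg_Dx; auto.
  split. apply C1_Dx; auto.
  change (C1 n a2 a1 (Dy (swap g))). apply C1_Dy; auto.
Qed.

Lemma Bc_Dy n a1 a2 g : Bc (S n) a1 a2 g -> (1 <= n)%nat -> Bc n a1 a2 (Dy g).
Proof.
  intros HB Hn. apply Bc_swap in HB. apply Bc_Dx in HB; auto. apply Bc_swap in HB. exact HB.
Qed.

Lemma Bc_mult i j a1 a2 g1 g2 : Bc i a1 a2 g1 -> Bc j a1 a2 g2 ->
  Bc (i + j) a1 a2 (fun x y => g1 x y * g2 x y).
Proof.
  intros [H1 [[r1 [Hr1 R1]] [C1a C1b]]] [H2 [[r2 [Hr2 R2]] [C2a C2b]]].
  split. rewrite H1; ring. split.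
  exists (Rmin r1 r2). split. apply Rmin_pos; auto. intros x y Hx Hy N.
  apply reg_mult; [apply R1| apply R2]; auto;
    (eapply Rlt_le_trans; [eassumption| first [apply Rmin_l| apply Rmin_r]]).
  split. apply C1_mult; auto. apply (C1_mult i j a2 a1 (swap g1) (swap g2)); auto.
Qed.

Lemma Bc_ext n a1 a2 g g' : (forall x y, g x y = g' x y) -> Bc n a1 a2 g -> Bc n a1 a2 g'.
Proof.
  intros E [H0 [[r [Hr R]] [C C']]]. split. rewrite <- E; auto. split.
  exists r. split; auto. intros. apply (reg_ext g); auto.
  split. apply (C1_ext _ _ _ g); auto. apply (C1_ext _ _ _ (swap g)); auto. intros; unfold swap; auto.
Qed.

Lemma Bc_pow n a1 a2 f : Bc 1 a1 a2 f -> (1 <= n)%nat -> Bc n a1 a2 (fun x y => f x y ^ n).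
Proof.
  intros H Hn. induction n. lia. destruct n.
  - apply (Bc_ext 1 a1 a2 f); auto. intros; simpl; ring.
  - apply (Bc_ext (1 + S n) a1 a2 (fun x y => f x y * f x y ^ S n)).
    intros; reflexivity. apply Bc_mult; auto. apply IHn; lia.
Qed.

Fixpoint ddX (e : pexpr) : pexpr := match e with
 | PC _ => PC 0 | PX => PC 1 | PY => PC 0
 | PAdd a b => PAdd (ddX a) (ddX b)
 | PMul a b => PAdd (PMul (ddX a) b) (PMul (psubst a (PC 0) PY) (ddX b)) end.

Lemma ddX_spec e s t : peval e s t = peval e 0 t + s * peval (ddX e) s t.
Proof.
  induction e; simpl; try ring.
  rewrite IHe1 at 1; rewrite IHe2 at 1; ring.
  rewrite peval_subst. simpl. rewrite IHe1 at 1. replace (peval e2 0 t) with (peval e2 s t - s * peval (ddX e2) s t) by (rewrite IHe2 at 1; ring). ring.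
Qed.

Lemma div_lemma F t : regular_at F 0 t -> (forall t', F 0 t' = 0) ->
  exists G, regular_at G 0 t /\ exists d, 0 < d /\
    forall s t', s <> 0 -> Rabs s < d -> Rabs (t' - t) < d -> F s t' = s * G s t'.
Proof.
  intros [p [q [h [Hh W]]]] HF.
  set (h' := PMul h (psubst h (PC 0) PY)).
  assert (W' : forall s t', peval h' s t' <> 0 -> peval q s t' <> 0 /\ F s t' = s * (peval (ddX p) s t' / peval q s t')).
  { intros s t' Hh'. unfold h' in Hh'. simpl in Hh'. rewrite peval_subst in Hh'. simpl in Hh'.
    assert (A1 : peval h s t' <> 0) by (intro E; apply Hh'; rewrite E; ring).
    assert (A2 : peval h 0 t' <> 0) by (intro E; apply Hh'; rewrite E; ring).
    destruct (W _ _ A1) as [Q1 E1]. destruct (W _ _ A2) as [Q2 E2].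
    rewrite HF in E2. assert (P0 : peval p 0 t' = 0).
    { apply (Rmult_eq_reg_r (/ peval q 0 t')). rewrite Rmult_0_l. symmetry. exact E2.
      apply Rinv_neq_0_compat; auto. }
    split; auto. rewrite E1. rewrite (ddX_spec p s t'), P0. field. auto. }
  assert (Hh0 : peval h' 0 t <> 0).
  { unfold h'. simpl. rewrite peval_subst. simpl. apply Rmult_integral_contrapositive; auto. }
  exists (fun s t => peval (ddX p) s t / peval q s t). split.
  - exists (ddX p), q, h'. split; auto. intros x y Hxy. split. apply W'; auto. reflexivity.
  - destruct (poly_nz_box h' 0 t Hh0) as [r [Hr Hb]]. exists r. split; auto.
    intros s t' Hs Hsd Ht. apply W'. apply Hb; auto. rewrite Rminus_0_r; auto.
Qed.

Lemma C1_of_chart a1 a2 f : f a1 a2 = 0 ->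
  (forall t, regular_at (fun s t => f (a1+s) (a2+s*t)) 0 t) -> C1 1 a1 a2 f.
Proof.
  intros H0 H t. destruct (div_lemma _ t (H t)) as [G [RG [d [Hd E]]]].
  intros t'. simpl. rewrite Rplus_0_r, Rmult_0_l, Rplus_0_r. exact H0.
  exists G. split; auto. exists d. split; auto. intros. rewrite E; auto. ring.
Qed.

Lemma list_avoid (S : list (R*R)) a1 a2 : exists rho, 0 < rho /\
  forall x y, Rabs (x-a1) < rho -> Rabs (y-a2) < rho -> (x <> a1 \/ y <> a2) -> ~ In (x,y) S.
Proof.
  induction S as [|[b1 b2] S IH].
  - exists 1. split. lra. intros; simpl; auto.
  - destruct IH as [rho [Hr IH]].
    destruct (classic (b1 = a1 /\ b2 = a2)) as [[E1 E2]|N].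
    + exists rho. split; auto. intros x y Hx Hy N [E|I].
      * injection E; intros; subst. tauto.
      * exact (IH x y Hx Hy N I).
    + assert (Pm : 0 < Rmax (Rabs (b1 - a1)) (Rabs (b2 - a2))).
      { destruct (Req_dec b1 a1).
        - assert (b2 <> a2) by tauto. eapply Rlt_le_trans; [| apply Rmax_r]. apply Rabs_pos_lt. lra.
        - eapply Rlt_le_trans; [| apply Rmax_l]. apply Rabs_pos_lt. lra. }
      exists (Rmin rho (Rmax (Rabs (b1 - a1)) (Rabs (b2 - a2)))). split. apply Rmin_pos; auto.
      intros x y Hx Hy N' [E|I].
      * injection E; intros; subst.
        assert (A1 := Rlt_le_trans _ _ _ Hx (Rmin_r _ _)).
        assert (A2 := Rlt_le_trans _ _ _ Hy (Rmin_r _ _)).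
        destruct (Rle_dec (Rabs (x - a1)) (Rabs (y - a2))).
        rewrite Rmax_right in A2; auto. lra. rewrite Rmax_left in A1; lra.
      * apply (IH x y); auto. eapply Rlt_le_trans; [exact Hx| apply Rmin_l].
        eapply Rlt_le_trans; [exact Hy| apply Rmin_l].
Qed.

Lemma chart_reg1 f a1 a2 : regular_at f a1 a2 -> forall t, regular_at (fun s t => f (a1+s) (a2+s*t)) 0 t.
Proof.
  intros [p [q [h [Hh W]]]] t.
  set (U := PAdd (PC a1) PX). set (V := PAdd (PC a2) (PMul PX PY)).
  exists (psubst p U V), (psubst q U V), (psubst h U V). rewrite !peval_subst. simpl.
  split. rewrite Rplus_0_r, Rmult_0_l, Rplus_0_r. exact Hh.
  intros x y H. rewrite !peval_subst in *. simpl in *. apply W; auto.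
Qed.

Lemma chart_reg2 f a1 a2 : regular_at f a1 a2 -> forall u, regular_at (fun u v => f (a1+u*v) (a2+v)) u 0.
Proof.
  intros [p [q [h [Hh W]]]] u.
  set (U := PAdd (PC a1) (PMul PX PY)). set (V := PAdd (PC a2) PY).
  exists (psubst p U V), (psubst q U V), (psubst h U V). rewrite !peval_subst. simpl.
  split. rewrite Rmult_0_r, !Rplus_0_r. exact Hh.
  intros x y H. rewrite !peval_subst in *. simpl in *. apply W; auto.
Qed.

Lemma f_Bc1 f a1 a2 : R0_1 f -> f a1 a2 = 0 -> Bc 1 a1 a2 f.
Proof.
  intros [_ [S [Hreg Hcent]]] H0.
  assert (Ch : (forall t, regular_at (fun s t => f (a1+s) (a2+s*t)) 0 t) /\
               (forall u, regular_at (fun u v => f (a1+u*v) (a2+v)) u 0)).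
  { destruct (classic (In (a1, a2) S)) as [I|I].
    - apply Hcent; auto.
    - split. apply chart_reg1; auto. apply chart_reg2; auto. }
  destruct Ch as [Ch1 Ch2].
  split. exact H0. split.
  - destruct (list_avoid S a1 a2) as [rho [Hr A]]. exists rho. split; auto.
  - split. apply C1_of_chart; auto.
    apply C1_of_chart. exact H0.
    intros t. apply (reg_ext (fun a b => f (a1 + b * a) (a2 + a))).
    intros; unfold swap; rewrite Rmult_comm; reflexivity.
    apply (reg_swap (fun u v => f (a1 + u * v) (a2 + v)) t 0). apply Ch2.
Qed.

Definition box a1 a2 rho : R -> R -> Prop := fun x y => Rabs (x-a1) < rho /\ Rabs (y-a2) < rho.

Lemma box_open a1 a2 rho : open2 (box a1 a2 rho).
Proof.
  intros x y [Hx Hy]. exists (Rmin (rho - Rabs (x - a1)) (rho - Rabs (y - a2))).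
  split. apply Rmin_pos; lra.
  intros x' y' H1 H2.
  assert (A1 := Rlt_le_trans _ _ _ H1 (Rmin_l _ _)).
  assert (A2 := Rlt_le_trans _ _ _ H2 (Rmin_r _ _)).
  split.
  - replace (x' - a1) with ((x' - x) + (x - a1)) by ring.
    generalize (Rabs_triang (x' - x) (x - a1)). lra.
  - replace (y' - a2) with ((y' - y) + (y - a2)) by ring.
    generalize (Rabs_triang (y' - y) (y - a2)). lra.
Qed.

Lemma open_loc_x U x y : open2 U -> U x y -> locally x (fun t => U t y).
Proof.
  intros HU H. destruct (HU x y H) as [r [Hr Hb]]. exists (mkposreal r Hr).
  intros t Ht. apply Hb. exact Ht. rewrite Rminus_diag, Rabs_R0; auto.
Qed.
Lemma open_loc_y U x y : open2 U -> U x y -> locally y (fun t => U x t).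
Proof.
  intros HU H. destruct (HU x y H) as [r [Hr Hb]]. exists (mkposreal r Hr).
  intros t Ht. apply Hb. rewrite Rminus_diag, Rabs_R0; auto. exact Ht.
Qed.

Lemma is_pderiv_ext U w g1 g2 h : open2 U -> (forall x y, U x y -> g1 x y = g2 x y) ->
  is_pderiv U w g1 h -> exists h', is_pderiv U w g2 h' /\ forall x y, U x y -> h x y = h' x y.
Proof.
  intros HU E H. revert g2 E. induction H; intros g2 E.
  - exists g2. split. constructor. exact E.
  - exists h. split; [| auto]. apply pd_x with g'; auto.
    intros x y Hxy. apply is_derive_Reals. apply (is_derive_ext_loc (fun t => g t y)).
    generalize (open_loc_x U x y HU Hxy). apply filter_imp. intros t Ht. apply E; auto.
    apply is_derive_Reals. auto.
  - exists h. split; [| auto]. apply pd_y with g'; auto.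
    intros x y Hxy. apply is_derive_Reals. apply (is_derive_ext_loc (fun t => g x t)).
    generalize (open_loc_y U x y HU Hxy). apply filter_imp. intros t Ht. apply E; auto.
    apply is_derive_Reals. auto.
Qed.

Lemma main_lemma a1 a2 rho : 0 < rho -> forall j n g, Bc n a1 a2 g ->
  (forall x y, box a1 a2 rho x y -> (x <> a1 \/ y <> a2) -> regular_at g x y) ->
  (j < n)%nat ->
  Ck_on j (box a1 a2 rho) g /\
  (forall w h, (length w <= j)%nat -> is_pderiv (box a1 a2 rho) w g h -> h a1 a2 = 0).
Proof.
  intros Hrho j. induction j; intros n g HB HR Hjn.
  - assert (Hc : cont_on (box a1 a2 rho) g).
    { intros x y Hxy. destruct (classic (x <> a1 \/ y <> a2)) as [N|N].
      apply reg_cont; auto. assert (x = a1) by (apply NNPP; tauto). assert (y = a2) by (apply NNPP; tauto).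
      subst. apply (Bc_cont n); auto; lia. }
    split. split; auto.
    intros w h Hw Hd. destruct w; [| simpl in Hw; lia]. inversion Hd; subst. apply HB.
  - destruct n as [|n]. lia.
    assert (HBx := Bc_Dx n a1 a2 g HB ltac:(lia)).
    assert (HBy := Bc_Dy n a1 a2 g HB ltac:(lia)).
    assert (HRx : forall x y, box a1 a2 rho x y -> (x <> a1 \/ y <> a2) -> regular_at (Dx g) x y)
      by (intros; apply reg_Dx; auto).
    assert (HRy : forall x y, box a1 a2 rho x y -> (x <> a1 \/ y <> a2) -> regular_at (Dy g) x y)
      by (intros; apply reg_Dy; auto).
    destruct (IHj n (Dx g) HBx HRx ltac:(lia)) as [Cx Vx].
    destruct (IHj n (Dy g) HBy HRy ltac:(lia)) as [Cy Vy].
    assert (Dg : forall x y, box a1 a2 rho x y ->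
       is_derive (fun t => g t y) x (Dx g x y) /\ is_derive (fun t => g x t) y (Dy g x y)).
    { intros x y Hxy. destruct (classic (x <> a1 \/ y <> a2)) as [N|N].
      split; [apply reg_derx| apply reg_dery]; auto.
      assert (x = a1) by (apply NNPP; tauto). assert (y = a2) by (apply NNPP; tauto). subst.
      destruct HBx as [E1 _]. destruct HBy as [E2 _]. rewrite E1, E2.
      split. apply (Bc_derx (S n)); auto; lia. apply (Bc_dery (S n)); auto; lia. }
    assert (Hc : cont_on (box a1 a2 rho) g).
    { intros x y Hxy. destruct (classic (x <> a1 \/ y <> a2)) as [N|N].
      apply reg_cont; auto. assert (x = a1) by (apply NNPP; tauto). assert (y = a2) by (apply NNPP; tauto).
      subst. apply (Bc_cont (S n)); auto; lia. }
    split.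
    + split; auto. exists (Dx g), (Dy g). split; [| split; auto].
      intros x y Hxy. destruct (Dg x y Hxy) as [D1 D2]. split; apply is_derive_Reals; auto.
    + intros w h Hw Hd. inversion Hd; subst.
      * apply HB.
      * assert (E : forall x y, box a1 a2 rho x y -> g' x y = Dx g x y).
        { intros x y Hxy. apply (uniqueness_limite (fun t => g t y) x). auto.
          apply is_derive_Reals. apply Dg; auto. }
        destruct (is_pderiv_ext _ _ _ _ _ (box_open a1 a2 rho) E H0) as [h' [Hp Eh]].
        rewrite Eh. apply (Vx w0 h'); auto. simpl in Hw; lia.
        split; rewrite Rminus_diag, Rabs_R0; auto.
      * assert (E : forall x y, box a1 a2 rho x y -> g' x y = Dy g x y).
        { intros x y Hxy. apply (uniqueness_limite (fun t => g x t) y). auto.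
          apply is_derive_Reals. apply Dg; auto. }
        destruct (is_pderiv_ext _ _ _ _ _ (box_open a1 a2 rho) E H0) as [h' [Hp Eh]].
        rewrite Eh. apply (Vy w0 h'); auto. simpl in Hw; lia.
        split; rewrite Rminus_diag, Rabs_R0; auto.
Qed.

Theorem corollary3p9 (k : nat) (f : R -> R -> R) :
  (0 < k)%nat -> R0_1 f ->
  forall m : nat, (2 * k <= m)%nat -> kflat k (fun x y => f x y ^ m).
Proof.
  intros Hk Hf m Hm x0 y0 Hz.
  assert (Hf0 : f x0 y0 = 0).
  { destruct (Req_dec (f x0 y0) 0); auto. exfalso. apply (pow_nonzero _ m H). exact Hz. }
  assert (HB := Bc_pow m x0 y0 f (f_Bc1 f x0 y0 Hf Hf0) ltac:(lia)).
  assert (HB' := HB). destruct HB' as [_ [[rho [Hr R]] _]].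
  destruct (main_lemma x0 y0 rho Hr k m _ HB) as [C V].
  intros x y [Hx Hy] N. apply R; auto. lia.
  exists (box x0 y0 rho). split. apply box_open. split.
  split; rewrite Rminus_diag, Rabs_R0; auto.
  split; auto.
Qed.
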